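(* Let $b,c,d$ be positive integers with $c/d\le b$, let $C$ be a non-empty set and $\|\cdot\|:\mathcal P(C)\setminus\{\emptyset\}\to\mathbb R_{\ge0}$. If $(C,\|\cdot\|)$ is $b$-big, then $(C,\|\cdot\|)$ is $(c,d)$-big.
   Context: $(C,\|\cdot\|)$ is $b$-big if for every non-empty $X\subseteq C$ and every colouring $\chi:X\to b$ there is a non-empty $Y\subseteq X$ on which $\chi$ is constant and $\|Y\|\ge\|X\|-1$. $(C,\|\cdot\|)$ is $(c,d)$-big if for every non-empty $X\subseteq C$ and every colouring $\chi:X\to c$ there is a non-empty $Y\subseteq X$ with $|\mathrm{ran}(\chi\restriction Y)|\le d$ and $\|Y\|\ge\|X\|-1$. *)

(* Defs.v *)
From Stdlib Require Import Reals List.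
Open Scope R_scope.

(* Subsets of C are predicates C -> Prop. The norm ||.|| is a function on
   subsets; only its values on non-empty subsets are ever used. *)
Definition nonemptyS {C : Type} (X : C -> Prop) : Prop := exists x, X x.
Definition subsetS {C : Type} (Y X : C -> Prop) : Prop := forall x, Y x -> X x.

(* chi : X -> k, represented as chi : C -> nat with values < k on X
   (values outside X are irrelevant). k = {0,...,k-1}. *)
Definition colouring {C : Type} (X : C -> Prop) (k : nat) (chi : C -> nat) : Prop :=
  forall x, X x -> (chi x < k)%nat.

Definition b_big {C : Type} (nrm : (C -> Prop) -> R) (b : nat) : Prop :=
  forall X : C -> Prop, nonemptyS X ->
  forall chi : C -> nat, colouring X b chi ->
  exists Y : C -> Prop, nonemptyS Y /\ subsetS Y X /\
    (exists i : nat, forall y, Y y -> chi y = i) /\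
    nrm Y >= nrm X - 1.

(* |ran(chi|Y)| <= d : the range of chi on Y is contained in a list of
   length <= d. *)
Definition range_card_le {C : Type} (chi : C -> nat) (Y : C -> Prop) (d : nat) : Prop :=
  exists s : list nat, (length s <= d)%nat /\ forall y, Y y -> In (chi y) s.

Definition cd_big {C : Type} (nrm : (C -> Prop) -> R) (c d : nat) : Prop :=
  forall X : C -> Prop, nonemptyS X ->
  forall chi : C -> nat, colouring X c chi ->
  exists Y : C -> Prop, nonemptyS Y /\ subsetS Y X /\
    range_card_le chi Y d /\
    nrm Y >= nrm X - 1.

(* Main.v *)
Require Import Defs.
From Stdlib Require Import Reals List Lia Lra Arith.
Open Scope R_scope.

Theorem lemma5p3 (b c d : nat) (C : Type) (nrm : (C -> Prop) -> R)
  (hb : (0 < b)%nat) (hc : (0 < c)%nat) (hd : (0 < d)%nat)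
  (hcd : INR c / INR d <= INR b)
  (hC : inhabited C)
  (hnrm : forall X : C -> Prop, nonemptyS X -> 0 <= nrm X) :
  b_big nrm b -> cd_big nrm c d.
Proof.
  intros Hb X HX chi Hchi.
  assert (Hdpos : 0 < INR d) by (apply lt_0_INR; lia).
  assert (Hle : (c <= b * d)%nat).
  { apply INR_le. rewrite mult_INR.
    replace (INR c) with (INR c / INR d * INR d) by (field; lra).
    apply Rmult_le_compat_r; lra. }
  destruct (Hb X HX (fun x => Nat.div (chi x) d)) as [Y [HY [HYX [[i Hi] Hn]]]].
  { intros x Hx. specialize (Hchi x Hx).
    apply Nat.Div0.div_lt_upper_bound. lia. }
  exists Y. split; [exact HY|]. split; [exact HYX|]. split; [|exact Hn].
  exists (seq (i * d) d). split. { rewrite length_seq. lia. }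
  intros y Hy. apply in_seq.
  specialize (Hi y Hy). simpl in Hi.
  pose proof (Nat.div_mod (chi y) d ltac:(lia)) as E.
  pose proof (Nat.mod_upper_bound (chi y) d ltac:(lia)).
  rewrite Hi in E. lia.
Qed.
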